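(* Let $f\in\mathcal S_{\mathbf M}$, let $\|\cdot\|$ be either the Luxemburg norm $\|\cdot\|_{\mathbf M}$ or the Orlicz norm $\|\cdot\|^*_{\mathbf M}$ (the same choice throughout), and let $\varphi\in\Phi$ and $\tau>0$ be such that $\varphi$ is nondecreasing on $[0,\tau]$ and $\varphi(\tau)=\max\{\varphi(t):t\in\mathbb R\}$. Then for any $n\in\mathbb N$, $$\omega_\varphi\Big(f,\frac{\tau}{n}\Big)\le\sum_{\nu=1}^n\Big(\varphi\Big(\frac{\tau\nu}{n}\Big)-\varphi\Big(\frac{\tau(\nu-1)}{n}\Big)\Big)E_\nu(f).$$
   Context: $L$ is the space of $2\pi$-periodic Lebesgue integrable functions, with Fourier coefficients $\widehat f(k)=(2\pi)^{-1}\int_0^{2\pi}f(x)e^{-\mathrm{i}kx}\,dx$. Let $\mathbf M=\{M_k\}_{k\in\mathbb Z}$ be a sequence of Orlicz functions on $[0,\infty)$ (nondecreasing, convex, $M_k(0)=0$, $M_k(u)\to\infty$ as $u\to\infty$). For a complex sequence $c=\{c_k\}_{k\in\mathbb Z}$: Luxemburg norm $\|c\|_{\mathbf M}=\inf\{a>0:\sum_kM_k(|c_k|/a)\le1\}$; with $\tilde M_k(v)=\sup\{uv-M_k(u):u\ge0\}$ and $\Lambda$ the set of positive sequences $\lambda$ with $\sum_k\tilde M_k(\lambda_k)\le1$, Orlicz norm $\|c\|^*_{\mathbf M}=\sup\{\sum_k\lambda_k|c_k|:\lambda\in\Lambda\}$. $\mathcal S_{\mathbf M}$ is the space of $f\in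 L$ with $\|\{\widehat f(k)\}\|_{\mathbf M}<\infty$; norms of $f$ are those of $\{\widehat f(k)\}$. $E_\nu(f)=\inf\{\|f-t\|:t\in\mathcal T_{\nu-1}\}$, $\mathcal T_{\nu-1}$ the trigonometric polynomials $\sum_{|k|\le\nu-1}c_ke^{\mathrm{i}kx}$. $\Phi$ is the set of all continuous, bounded, nonnegative, even functions $\varphi:\mathbb R\to\mathbb R$ with $\varphi(0)=0$ such that $\{t:\varphi(t)=0\}$ has Lebesgue measure zero. For $h\in\mathbb R$, $\Delta_h^\varphi f$ is the sequence $\{\varphi(kh)\widehat f(k)\}_{k\in\mathbb Z}$ and $\omega_\varphi(f,\delta)=\sup_{|h|\le\delta}\|\Delta_h^\varphi f\|$. *)

(* Defs.v *)
From HB Require Import structures.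
From mathcomp Require Import all_boot all_order all_algebra.
From mathcomp Require Import all_classical all_reals all_analysis.
Set Implicit Arguments. Unset Strict Implicit. Unset Printing Implicit Defensive.
Import Order.TTheory GRing.Theory Num.Theory.
Import numFieldNormedType.Exports.
Local Open Scope classical_set_scope.
Local Open Scope ring_scope.

Section Defs.
Variable R : realType.

Definition orlicz_fun (M : R -> R) : Prop :=
  [/\ M 0 = 0,
      (forall u v, 0 <= u -> u <= v -> M u <= M v),
      (forall u v t, 0 <= u -> 0 <= v -> 0 <= t -> t <= 1 ->
          M ((1 - t) * u + t * v) <= (1 - t) * M u + t * M v) &
      (forall B : R, exists u0, forall u, u0 <= u -> B <= M u)].

Definition compl_fun (M : R -> R) (v : R) : \bar R :=
  ereal_sup [set ((u * v - M u)%:E) | u in [set u : R | 0 <= u]].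

(* Norms of a complex sequence c, given through its moduli a k = |c_k|. *)
Definition lux_norm (M : int -> R -> R) (a : int -> R) : \bar R :=
  ereal_inf [set (s%:E) | s in
    [set s : R | 0 < s /\ (\esum_(k in [set: int]) (M k (a k / s))%:E <= 1%:E)%E]].

Definition orl_norm (M : int -> R -> R) (a : int -> R) : \bar R :=
  ereal_sup [set (\esum_(k in [set: int]) (lam k * a k)%:E)%E | lam in
    [set lam : int -> R | (forall k, 0 <= lam k) /\
        (\esum_(k in [set: int]) compl_fun (M k) (lam k) <= 1%:E)%E]].

Inductive norm_kind := Luxemburg | Orlicz.

Definition seq_norm (nk : norm_kind) (M : int -> R -> R) (a : int -> R) : \bar R :=
  match nk with Luxemburg => lux_norm M a | Orlicz => orl_norm M a end.

(* A complex-valued function f = u + i v. *)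
Definition in_L (u v : R -> R) : Prop :=
  [/\ (forall x, u (x + 2 * pi) = u x), (forall x, v (x + 2 * pi) = v x),
      lebesgue_measure.-integrable `[0%R, 2 * pi] (EFin \o u) &
      lebesgue_measure.-integrable `[0%R, 2 * pi] (EFin \o v)].

(* Fourier coefficient (2pi)^-1 int_0^{2pi} f(x) e^{-ikx} dx, real and imaginary parts:
   (u + i v)(cos kx - i sin kx) = (u cos kx + v sin kx) + i (v cos kx - u sin kx). *)
Definition fcoef_re (u v : R -> R) (k : int) : R :=
  (2 * pi)^-1 * Rintegral lebesgue_measure `[0%R, 2 * pi]
     (fun x => u x * cos (k%:~R * x) + v x * sin (k%:~R * x)).
Definition fcoef_im (u v : R -> R) (k : int) : R :=
  (2 * pi)^-1 * Rintegral lebesgue_measure `[0%R, 2 * pi]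
     (fun x => v x * cos (k%:~R * x) - u x * sin (k%:~R * x)).

Definition cmod (a b : R) : R := Num.sqrt (a ^+ 2 + b ^+ 2).

Definition fmod (u v : R -> R) (k : int) : R := cmod (fcoef_re u v k) (fcoef_im u v k).

Definition fnorm nk M (u v : R -> R) : \bar R := seq_norm nk M (fmod u v).

Definition in_SM M (u v : R -> R) : Prop := in_L u v /\ (lux_norm M (fmod u v) < +oo)%E.

(* E_nu(f) = inf { ||f - t|| : t in T_{nu-1} }, where
   t = sum_{|k| <= nu-1} c_k e^{ikx} has Fourier coefficients c_k for |k| <= nu-1
   and 0 otherwise; c_k = cr k + i ci k. *)
Definition best_approx nk M (u v : R -> R) (nu : nat) : \bar R :=
  ereal_inf [set seq_norm nk M
      (fun k => if (absz k < nu)%N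
                then cmod (fcoef_re u v k - cr k) (fcoef_im u v k - ci k)
                else fmod u v k)
    | cr in [set: int -> R] & ci in [set: int -> R]].

Definition in_Phi (phi : R -> R) : Prop :=
  (continuous phi /\ exists B : R, forall t, phi t <= B) /\
  [/\
      (forall t, 0 <= phi t),
      (forall t, phi (- t) = phi t),
      phi 0 = 0 &
      lebesgue_measure [set t : R | phi t = 0] = 0%E].

Definition modulus_phi nk M (phi : R -> R) (u v : R -> R) (delta : R) : \bar R :=
  ereal_sup [set seq_norm nk M (fun k => `|phi (k%:~R * h)| * fmod u v k)
    | h in [set h : R | `|h| <= delta]].

End Defs.

(* Main.v *)
Require Import Defs.
From HB Require Import structures.
From mathcomp Require Import all_boot all_order all_algebra.
From mathcomp Require Import all_classical all_reals all_analysis.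
From mathcomp Require Import ring lra.
Import Order.TTheory GRing.Theory Num.Theory.
Local Open Scope classical_set_scope.
Local Open Scope ring_scope.

Section Norms.
Variables (R : realType) (M : int -> R -> R).
Hypothesis HM : forall k, orlicz_fun (M k).

Definition nneg (a : int -> R) := forall k, 0 <= a k.

Lemma M0 k : M k 0 = 0. Proof. by case: (HM k). Qed.
Lemma Mmono k x y : 0 <= x -> x <= y -> M k x <= M k y.
Proof. by case: (HM k) => _ H _ _; apply: H. Qed.
Lemma M_ge0 k x : 0 <= x -> 0 <= M k x.
Proof. by move=> x0; rewrite -(M0 k); apply: Mmono. Qed.
Lemma Mconv k x y t : 0 <= x -> 0 <= y -> 0 <= t -> t <= 1 ->
  M k ((1 - t) * x + t * y) <= (1 - t) * M k x + t * M k y.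
Proof. by case: (HM k) => _ _ H _; apply: H. Qed.

Lemma esumZ_le (c : R) (a : int -> \bar R) : 0 <= c -> (forall k, (0 <= a k)%E) ->
  (\esum_(k in [set: int]) (c%:E * a k) <= c%:E * \esum_(k in [set: int]) a k)%E.
Proof.
move=> c0 a0; apply: ge_ereal_sup => _ [X [finX _] <-].
rewrite -ge0_mule_fsumr//; apply: lee_wpmul2l; first by rewrite lee_fin.
by apply: ereal_sup_ubound; exists X.
Qed.

Lemma lux_ge0 a : (0 <= lux_norm M a)%E.
Proof.
by apply: le_ereal_inf_tmp => _ [s [s0 _] <-]; rewrite lee_fin ltW.
Qed.

Lemma lux_mono a b : nneg a -> (forall k, a k <= b k) -> (lux_norm M a <= lux_norm M b)%E.
Proof.
move=> a0 ab; apply: ereal_inf_le_tmp => _ [s [s0 Hs] <-]; exists s => //; split => //.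
apply: le_trans Hs; apply: le_esum => k _; rewrite lee_fin.
apply: Mmono; first by rewrite divr_ge0// ltW.
by rewrite ler_wpM2r// invr_ge0 ltW.
Qed.

Lemma lux0 : (lux_norm M (fun _ => 0%R) <= 0)%E.
Proof.
apply/lee_addgt0Pr => e e0; rewrite add0e; apply: ge_ereal_inf.
exists e%:E => //; exists e => //; split => //.
by rewrite esum1 // => k _; rewrite mul0r M0.
Qed.

Lemma lux_scale (c : R) (a : int -> R) : 0 < c -> nneg a ->
  (lux_norm M (fun k => (c * a k)%R) <= c%:E * lux_norm M a)%E.
Proof.
move=> c0 a0; rewrite -lee_pdivrMl//; apply: le_ereal_inf_tmp => _ [s [s0 Hs] <-].
rewrite lee_pdivrMl//; apply: ereal_inf_lbound; exists (c * s); last by rewrite EFinM.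
split; first by rewrite mulr_gt0.
apply: le_trans Hs; rewrite le_eqVlt; apply/orP; left; apply/eqP.
apply: eq_esum => k _; congr (_%:E); congr (M k _).
by field; apply/andP; split; rewrite gt_eqF.
Qed.

Lemma lux_add a b : nneg a -> nneg b ->
  (lux_norm M (fun k => (a k + b k)%R) <= lux_norm M a + lux_norm M b)%E.
Proof.
move=> a0 b0.
have key : forall s t, 0 < s -> 0 < t ->
   (\esum_(k in [set: int]) (M k (a k / s))%:E <= 1%:E)%E ->
   (\esum_(k in [set: int]) (M k (b k / t))%:E <= 1%:E)%E ->
   (lux_norm M (fun k => (a k + b k)%R) <= (s + t)%:E)%E.
  move=> s t s0 t0 Hs Ht; apply: ereal_inf_lbound; exists (s + t) => //; split.
    by rewrite addr_gt0.
  have st0 : 0 < s + t by rewrite addr_gt0.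
  set th := t / (s + t).
  have th0 : 0 <= th by rewrite divr_ge0// ltW.
  have th1 : 1 - th = s / (s + t).
    by rewrite /th; field; rewrite gt_eqF.
  have th0' : 0 <= 1 - th by rewrite th1 divr_ge0// ltW.
  apply: (@le_trans _ _ (\esum_(k in [set: int])
     (((1 - th)%:E * (M k (a k / s))%:E) + (th%:E * (M k (b k / t))%:E)))%E).
    apply: le_esum => k _; rewrite -!EFinM -EFinD lee_fin.
    have -> : (a k + b k) / (s + t) = (1 - th) * (a k / s) + th * (b k / t).
      by rewrite th1 /th; field; apply/and3P; split; rewrite gt_eqF.
    apply: Mconv => //.
    - exact: divr_ge0 (a0 k) (ltW s0).
    - exact: divr_ge0 (b0 k) (ltW t0).
    - by rewrite /th ler_pdivrMr//; lra.
  rewrite (@esumD _ _ _ (fun k => ((1 - th)%:E * (M k (a k / s))%:E)%E)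
     (fun k => (th%:E * (M k (b k / t))%:E)%E)); last 2 first.
  - by move=> k _; rewrite -EFinM lee_fin mulr_ge0// M_ge0// divr_ge0// ltW.
  - by move=> k _; rewrite -EFinM lee_fin mulr_ge0// M_ge0// divr_ge0// ltW.
  have ge1 : forall k, (0 <= (M k (a k / s))%:E)%E.
    by move=> k; rewrite lee_fin M_ge0// divr_ge0// ltW.
  have ge2 : forall k, (0 <= (M k (b k / t))%:E)%E.
    by move=> k; rewrite lee_fin M_ge0// divr_ge0// ltW.
  apply: le_trans; first exact: (leeD (esumZ_le _ _ th0' ge1) (esumZ_le _ _ th0 ge2)).
  apply: le_trans.
    apply: (leeD (lee_wpmul2l _ Hs) (lee_wpmul2l _ Ht)); by rewrite lee_fin.
  by rewrite -!EFinM -EFinD !mulr1 lee_fin subrK.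
have [->|] := eqVneq (lux_norm M b) +oo%E.
  by rewrite addey ?leey// gt_eqF// (lt_le_trans _ (lux_ge0 a))// ltNy0.
move=> bfin.
have fb : lux_norm M b \is a fin_num by rewrite ge0_fin_numE ?lux_ge0// ltey.
rewrite -leeBlDr//; apply: le_ereal_inf_tmp => _ [s [s0 Hs] <-].
rewrite leeBlDr// addeC -leeBlDr//; apply: le_ereal_inf_tmp => _ [t [t0 Ht] <-].
by rewrite leeBlDr// -EFinD addrC; apply: key.
Qed.

Lemma orl_mono a b : nneg a -> (forall k, a k <= b k) -> (orl_norm M a <= orl_norm M b)%E.
Proof.
move=> a0 ab; apply: ge_ereal_sup => _ [lam [l0 Hl] <-].
apply: le_ereal_sup_tmp; exists (\esum_(k in [set: int]) (lam k * b k)%:E)%E.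
  by exists lam.
by apply: le_esum => k _; rewrite lee_fin ler_wpM2l.
Qed.

Lemma orl0 : (orl_norm M (fun _ => 0%R) <= 0)%E.
Proof.
by apply: ge_ereal_sup => _ [lam _ <-]; rewrite esum1 // => k _; rewrite mulr0.
Qed.

Lemma orl_scale (c : R) (a : int -> R) : 0 <= c -> nneg a ->
  (orl_norm M (fun k => (c * a k)%R) <= c%:E * orl_norm M a)%E.
Proof.
move=> c0 a0; apply: ge_ereal_sup => _ [lam [l0 Hl] <-].
rewrite (eq_esum (b := fun k => (c%:E * (lam k * a k)%:E)%E)); last first.
  by move=> k _; rewrite -EFinM mulrCA.
apply: le_trans; first apply: esumZ_le => //.
  by move=> k; rewrite lee_fin mulr_ge0.
apply: lee_wpmul2l; first by rewrite lee_fin.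
by apply: ereal_sup_ubound; exists lam.
Qed.

Lemma orl_add a b : nneg a -> nneg b ->
  (orl_norm M (fun k => (a k + b k)%R) <= orl_norm M a + orl_norm M b)%E.
Proof.
move=> a0 b0; apply: ge_ereal_sup => _ [lam [l0 Hl] <-].
rewrite (eq_esum (b := fun k => ((lam k * a k)%:E + (lam k * b k)%:E)%E)); last first.
  by move=> k _; rewrite -EFinD mulrDr.
rewrite esumD; last 2 first.
- by move=> k _; rewrite lee_fin mulr_ge0.
- by move=> k _; rewrite lee_fin mulr_ge0.
by apply: leeD; apply: ereal_sup_ubound; exists lam.
Qed.

Variable nk : norm_kind.
Local Notation N := (seq_norm nk M).

Lemma N_mono a b : nneg a -> (forall k, a k <= b k) -> (N a <= N b)%E.
Proof. by case: nk => /=; [apply: lux_mono | apply: orl_mono]. Qed.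

Lemma N0 : (N (fun _ => 0%R) <= 0)%E.
Proof. by case: nk => /=; [apply: lux0 | apply: orl0]. Qed.

Lemma N_add a b : nneg a -> nneg b ->
  (N (fun k => (a k + b k)%R) <= N a + N b)%E.
Proof. by case: nk => /=; [apply: lux_add | apply: orl_add]. Qed.

Lemma N_scale (c : R) (a : int -> R) : 0 <= c -> nneg a ->
  (N (fun k => (c * a k)%R) <= c%:E * N a)%E.
Proof.
move=> c0 a0; have [->|cn0] := eqVneq c 0.
  rewrite mul0e (_ : (fun k => _) = (fun _ => 0%R)); first exact: N0.
  by apply: funext => k; rewrite mul0r.
have cp : 0 < c by rewrite lt_def cn0 c0.
by case: nk => /=; [apply: lux_scale | apply: orl_scale].
Qed.

Lemma N_sum (I : eqType) (r : seq I) (F : I -> int -> R) :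
  (forall i, i \in r -> nneg (F i)) ->
  (N (fun k => (\sum_(i <- r) F i k)%R) <= \sum_(i <- r) N (F i))%E.
Proof.
elim: r => [|i r IH] F0.
  rewrite big_nil (_ : (fun k => _) = (fun _ => 0%R)); first exact: N0.
  by apply: funext => k; rewrite big_nil.
rewrite big_cons (_ : (fun k => _) = (fun k => F i k + \sum_(j <- r) F j k)%R); last first.
  by apply: funext => k; rewrite big_cons.
apply: le_trans; first apply: N_add.
- by apply: F0; rewrite mem_head.
- move=> k; rewrite big_seq; apply: sumr_ge0 => j jr; apply: F0.
  by rewrite in_cons jr orbT.
apply: leeD => //; apply: IH => j jr; apply: F0; by rewrite in_cons jr orbT.
Qed.
End Norms.

From mathcomp Require Import zify.

Section Main.
Variables (R : realType) (phi : R -> R) (tau : R) (n : nat).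

Definition FF (i : nat) := phi (tau * i%:R / n%:R).
Definition dd (i : nat) := FF i - FF i.-1.

Hypotheses (tau0 : 0 < tau) (n0 : (0 < n)%N) (phi0 : forall t, 0 <= phi t)
  (phie : forall t, phi (- t) = phi t) (phi00 : phi 0 = 0)
  (mono : {in `[0, tau] &, forall x y, x <= y -> phi x <= phi y})
  (phimax : forall t, phi t <= phi tau).

Lemma pt_in i : (i <= n)%N -> tau * i%:R / n%:R \in `[0, tau].
Proof.
move=> le; rewrite in_itv /=; apply/andP; split.
  by rewrite divr_ge0 // mulr_ge0 // ltW.
rewrite ler_pdivrMr ?ltr0n //; apply: ler_wpM2l; first exact: ltW.
by rewrite ler_nat.
Qed.

Lemma dd_ge0 i : (1 <= i <= n)%N -> 0 <= dd i.
Proof.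
move=> /andP[i1 le]; rewrite subr_ge0; apply: mono.
- exact: pt_in (leq_trans (leq_pred i) le).
- exact: pt_in le.
apply: ler_wpM2r; first by rewrite invr_ge0.
by apply: ler_wpM2l; [exact: ltW | rewrite ler_nat leq_pred].
Qed.

Lemma tele m : \sum_(1 <= nu < m.+1) dd nu = FF m - FF 0.
Proof.
elim: m => [|m IH]; first by rewrite big_geq // subrr.
rewrite big_nat_recr //= IH /dd /=; ring.
Qed.

Lemma FFn : FF n = phi tau.
Proof. by rewrite /FF mulfK // pnatr_eq0 -lt0n. Qed.

Lemma FF0 : FF 0 = 0.
Proof. by rewrite /FF mulr0 mul0r phi00. Qed.

Lemma phi_bound (k : int) (h : R) : `|h| <= tau / n%:R ->
  `|phi (k%:~R * h)| <= FF (minn (absz k) n).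
Proof.
move=> hh; rewrite ger0_norm //.
have -> : phi (k%:~R * h) = phi `|k%:~R * h|.
  have [x0|x0] := leP 0 (k%:~R * h); first by rewrite ger0_norm.
  by rewrite ltr0_norm // phie.
case: (leqP (absz k) n) => kn.

  have hkh : `|k%:~R * h| <= tau * (absz k)%:R / n%:R.
    rewrite normrM -intr_norm -natr_absz.
    apply: le_trans (ler_wpM2l (ler0n _ _) hh) _.
    by rewrite mulrA (mulrC _ tau).
  apply: mono => //; last exact: pt_in.
  rewrite in_itv /= normr_ge0 /=; apply: le_trans hkh _.
  by have := pt_in _ kn; rewrite in_itv /= => /andP[].
by rewrite FFn.
Qed.

Lemma sum_g (a : nat) :
  \sum_(1 <= nu < n.+1) (if (a < nu)%N then 0 else dd nu) = FF (minn a n) - FF 0.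
Proof.
set m := minn a n.
have m1 : (1 <= m.+1)%N by [].
have mn : (m.+1 <= n.+1)%N by rewrite ltnS geq_minr.
rewrite (big_cat_nat (n := m.+1) m1 mn) /=.
rewrite [X in _ + X]big_nat_cond [X in _ + X]big1 ?addr0; last first.
  move=> i /andP[/andP[mi i_n] _].
  have -> : (a < i)%N by rewrite /m in mi; lia.
  by [].
rewrite -tele; apply: eq_big_nat => i /andP[i1 im].
have -> : (a < i)%N = false by rewrite /m in im; lia.
by [].
Qed.
End Main.

Theorem theorem3 (R : realType) (M : int -> R -> R) (nk : norm_kind)
    (u v : R -> R) (phi : R -> R) (tau : R) (n : nat) :
  (forall k, orlicz_fun (M k)) ->
  in_SM M u v ->
  in_Phi phi ->
  0 < tau ->
  {in `[0, tau] &, forall x y, x <= y -> phi x <= phi y} ->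
  (forall t, phi t <= phi tau) ->
  (0 < n)%N ->
  (modulus_phi nk M phi u v (tau / n%:R) <=
    \sum_(1 <= nu < n.+1)
      ((phi (tau * nu%:R / n%:R) - phi (tau * (nu.-1)%:R / n%:R))%:E
        * best_approx nk M u v nu))%E.
Proof.
move=> HM _ [_ [phi0 phie phi00 _]] tau0 mono phimax n0.
set f := fmod u v.
have f0 : nneg R f by move=> k; apply: sqrtr_ge0.
pose g nu k := if (absz k < nu)%N then 0 else f k.
have g0 : forall nu, nneg R (g nu).
  by move=> nu k; rewrite /g; case: ifP.
have d0 : forall nu, nu \in index_iota 1 n.+1 -> 0 <= dd R phi tau n nu.
  by move=> nu; rewrite mem_index_iota ltnS => H; apply: dd_ge0.
apply: (@le_trans _ _ (seq_norm nk M
   (fun k => (\sum_(1 <= nu < n.+1) dd R phi tau n nu * g nu k)%R))).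
  apply: ge_ereal_sup => _ [h hh <-]; apply: N_mono => //.
    by move=> k; rewrite mulr_ge0.
  move=> k.
  rewrite (eq_bigr (fun nu => (if (absz k < nu)%N then 0 else dd R phi tau n nu) * f k)); last first.
    by move=> nu _; rewrite /g; case: ifP => _; rewrite ?mulr0 ?mul0r // mulrC.
  rewrite -mulr_suml sum_g // (@FF0 R phi tau n phi00) subr0; apply: ler_wpM2r => //.
  exact: phi_bound.
apply: le_trans.
  apply: (@N_sum R M HM nk _ (index_iota 1 n.+1) (fun nu k => dd R phi tau n nu * g nu k)).
  by move=> nu Hnu k; apply: mulr_ge0; [exact: d0 | exact: g0].
rewrite big_seq [X in (_ <= X)%E]big_seq; apply: lee_sum => nu Hnu.
apply: le_trans; first apply: N_scale => //; first exact: d0.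
apply: lee_wpmul2l; first by rewrite lee_fin d0.
apply: le_ereal_inf_tmp => _ [cr _ [ci _ <-]]; apply: N_mono => // k.
by rewrite /g; case: ifP => _ //; apply: sqrtr_ge0.
Qed.
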